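(* Let $d\ge2$ and $m\in\mathbb R$, and set $\theta=\frac m4(d-1)$. For every smooth $f$ on $\mathbb R_+^d$ and every $x=(x_1,\dots,x_{d-1})$ with $x_i\ge0$, $\sum_{j=1}^{d-1}x_j\le1$, setting $x_d=1-\sum_{j=1}^{d-1}x_j$ and $g(x_1,\dots,x_{d-1})=f(x_1,\dots,x_{d-1},1-\sum_{j=1}^{d-1}x_j)$, one has $\mathscr L_d^{BEP(m)}f(x_1,\dots,x_{d-1},x_d)=\mathscr L^{WF}_{d,\theta}g(x_1,\dots,x_{d-1})$. That is, the Brownian Energy process with parameter $m$ on the complete graph with $d$ vertices started with $\sum_{i=1}^dx_i=1$ coincides with the $d$-types Wright–Fisher diffusion with symmetric parent-independent mutation at rate $\theta=\frac m4(d-1)$.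
   Context: The Brownian Energy process BEP($m$) on the complete graph with $d$ vertices is the diffusion on $\mathbb R_+^d$ with generator $\mathscr L_d^{BEP(m)}f(y)=\frac12\sum_{1\le i<j\le d}y_iy_j(\partial_{y_i}-\partial_{y_j})^2f(y)-\frac m4\sum_{1\le i<j\le d}(y_i-y_j)(\partial_{y_i}-\partial_{y_j})f(y)$. The $d$-types Wright–Fisher model with symmetric parent-independent mutation at rate $\theta$ is the diffusion on the simplex $\{x\in\mathbb R^{d-1}: x_i\ge0,\ \sum_i x_i\le1\}$ with generator $\mathscr L^{WF}_{d,\theta}g(x)=\sum_{i=1}^{d-1}\frac12x_i(1-x_i)\partial^2_{x_i}g(x)-\sum_{1\le i<j\le d-1}x_ix_j\partial_{x_i}\partial_{x_j}g(x)+\frac{\theta}{d-1}\sum_{i=1}^{d-1}(1-dx_i)\partial_{x_i}g(x)$. *)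

(* Defs.v *)
From HB Require Import structures.
From mathcomp Require Import all_boot all_order all_algebra.
From mathcomp Require Import all_classical all_reals all_analysis.
Set Implicit Arguments. Unset Strict Implicit. Unset Printing Implicit Defensive.
Import Order.TTheory GRing.Theory Num.Theory.
Import numFieldNormedType.Exports.
Local Open Scope ring_scope.

Section Defs.
Variable R : realType.

Definition ebasis (n : nat) (i : 'I_n) : 'rV[R]_n := delta_mx 0 i.

Definition pd (n : nat) (i : 'I_n) (f : 'rV[R]_n -> R) : 'rV[R]_n -> R :=
  fun y => derive f y (ebasis i).

Fixpoint Ck (n : nat) (k : nat) (f : 'rV[R]_n -> R) : Prop :=
  match k with
  | 0 => continuous f
  | k'.+1 => (forall y, differentiable f y) /\ (forall i : 'I_n, Ck k' (pd i f))
  end.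

Definition smooth (n : nat) (f : 'rV[R]_n -> R) : Prop := forall k, Ck k f.

Definition pdiff (n : nat) (i j : 'I_n) (f : 'rV[R]_n -> R) : 'rV[R]_n -> R :=
  fun y => pd i f y - pd j f y.

Definition L_BEP (d : nat) (m : R) (f : 'rV[R]_d -> R) (y : 'rV[R]_d) : R :=
  2^-1 * (\sum_(i < d) \sum_(j < d | (i < j)%N)
            y 0 i * y 0 j * pdiff i j (pdiff i j f) y)
  - m / 4 * (\sum_(i < d) \sum_(j < d | (i < j)%N)
            (y 0 i - y 0 j) * pdiff i j f y).

Definition L_WF (d : nat) (theta : R) (g : 'rV[R]_(d.-1) -> R)
    (x : 'rV[R]_(d.-1)) : R :=
  \sum_(i < d.-1) 2^-1 * x 0 i * (1 - x 0 i) * pd i (pd i g) x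
  - \sum_(i < d.-1) \sum_(j < d.-1 | (i < j)%N) x 0 i * x 0 j * pd i (pd j g) x
  + theta / (d.-1)%:R * \sum_(i < d.-1) (1 - d%:R * x 0 i) * pd i g x.

(* (x_1,...,x_{d-1}) |-> (x_1,...,x_{d-1}, 1 - sum_j x_j) *)
Definition simplex_lift (d : nat) (x : 'rV[R]_(d.-1)) : 'rV[R]_d :=
  \row_(i < d) oapp (fun j : 'I_(d.-1) => x 0 j) (1 - \sum_(j < d.-1) x 0 j)
                    (insub (val i)).

End Defs.

(* Main.v *)
Require Import Defs.
From HB Require Import structures.
From mathcomp Require Import all_boot all_order all_algebra.
From mathcomp Require Import all_classical all_reals all_analysis.
From mathcomp Require Import ring lra.
Import Order.TTheory GRing.Theory Num.Theory.
Import numFieldNormedType.Exports.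
Local Open Scope ring_scope.

Section S.
Variable R : realType.


Lemma sum_pairs n (G : 'I_n -> 'I_n -> R) :
  \sum_(i < n) \sum_(j < n) G i j =
  \sum_(i < n) \sum_(j < n | (i < j)%N) (G i j + G j i) + \sum_(i < n) G i i.
Proof.
have E i j : G i j = ((if (i < j)%N then G i j else 0) + (if (j < i)%N then G i j else 0))
    + (if j == i then G i j else 0).
  case: (j =P i) => [->|ne]; first by rewrite ltnn /= !add0r.
  rewrite addr0; case: ltngtP => h; rewrite ?addr0 ?add0r //.
  by exfalso; apply: ne; apply/val_inj.
under eq_bigr => i _ do under eq_bigr => j _ do rewrite E.
under eq_bigr => i _ do rewrite !big_split /=.
rewrite !big_split /=; congr (_ + _).
  rewrite [X in _ + X]exchange_big /= -big_split /=.
  apply: eq_bigr => i _; rewrite [RHS]big_mkcond /= -big_split /=.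
  by apply: eq_bigr => j _; case: ifP; rewrite ?addr0.
by apply: eq_bigr => i _; rewrite -big_mkcond big_pred1_eq.
Qed.


Lemma split2 n (Q : 'I_n.+1 -> 'I_n.+1 -> R) :
  \sum_(a < n.+1) \sum_(b < n.+1 | (a < b)%N) Q a b =
  \sum_(i < n) \sum_(j < n | (i < j)%N) Q (widen_ord (leqnSn n) i) (widen_ord (leqnSn n) j)
  + \sum_(i < n) Q (widen_ord (leqnSn n) i) ord_max.
Proof.
rewrite big_ord_recr /= [X in _ + X]big1 ?addr0; last first.
  by move=> b; rewrite ltnNge -ltnS ltn_ord.
rewrite -big_split /=; apply: eq_bigr => i _.
rewrite big_mkcond big_ord_recr /= ltn_ord; congr (_ + _).
by rewrite [RHS]big_mkcond.
Qed.

Lemma algebra n (n0 : (0 < n)%N) (x : 'I_n -> R) (y F : 'I_n.+1 -> R)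
  (S : 'I_n.+1 -> 'I_n.+1 -> R) (m : R)
  (Ssym : forall a b, S a b = S b a)
  (hyw : forall i, y (widen_ord (leqnSn n) i) = x i)
  (hyl : y ord_max = 1 - \sum_(i < n) x i) :
  2^-1 * (\sum_(a < n.+1) \sum_(b < n.+1 | (a < b)%N)
      y a * y b * ((S a a - S a b) - (S b a - S b b)))
  - m / 4 * (\sum_(a < n.+1) \sum_(b < n.+1 | (a < b)%N) (y a - y b) * (F a - F b))
  = \sum_(i < n) 2^-1 * x i * (1 - x i) *
      ((S (widen_ord (leqnSn n) i) (widen_ord (leqnSn n) i) - S (widen_ord (leqnSn n) i) ord_max)
       - (S ord_max (widen_ord (leqnSn n) i) - S ord_max ord_max))
    - \sum_(i < n) \sum_(j < n | (i < j)%N) x i * x j *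
      ((S (widen_ord (leqnSn n) i) (widen_ord (leqnSn n) j) - S (widen_ord (leqnSn n) i) ord_max)
       - (S ord_max (widen_ord (leqnSn n) j) - S ord_max ord_max))
    + m / 4 * n%:R / n%:R * \sum_(i < n) (1 - n.+1%:R * x i) *
        (F (widen_ord (leqnSn n) i) - F ord_max).
Proof.
rewrite !split2.
under eq_bigr => i _ do under eq_bigr => j _ do rewrite !hyw.
under [X in _ - m / 4 * (X + _)]eq_bigr => i _ do under eq_bigr => j _ do rewrite !hyw.
under [X in 2^-1 * (_ + X)]eq_bigr => i _ do rewrite hyw hyl.
under [X in _ - m / 4 * (_ + X)]eq_bigr => i _ do rewrite hyw hyl.
set w := widen_ord (leqnSn n); set l : 'I_n.+1 := ord_max.
set s := \sum_(i < n) x i.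
pose P i := (S (w i) (w i) - S (w i) l) - (S l (w i) - S l l).
pose T i j := (S (w i) (w j) - S (w i) l) - (S l (w j) - S l l).
pose C := \sum_(i < n) \sum_(j < n | (i < j)%N) x i * x j * T i j.
pose Fd i := F (w i) - F l.
have E2 : \sum_(i < n) \sum_(j < n | (i < j)%N)
      x i * x j * ((S (w i) (w i) - S (w i) (w j)) - (S (w j) (w i) - S (w j) (w j)))
    = (\sum_(i < n) x i * P i * s - \sum_(i < n) x i * x i * P i) - 2 * C.
  have H := @sum_pairs n (fun i j => x i * x j * P i).
  have H2 : \sum_(i < n) \sum_(j < n) x i * x j * P i = \sum_(i < n) x i * P i * s.
    apply: eq_bigr => i _; rewrite /s mulr_sumr; apply: eq_bigr => j _; ring.
  rewrite H2 in H; rewrite H addrK /C mulr_sumr -sumrB.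
  apply: eq_bigr => i _; rewrite mulr_sumr -sumrB; apply: eq_bigr => j _.
  rewrite /P /T (Ssym (w j) (w i)) (Ssym l (w i)) (Ssym (w j) l); ring.
have E1 : \sum_(i < n) \sum_(j < n | (i < j)%N) (x i - x j) * (F (w i) - F (w j))
    = \sum_(i < n) (n%:R * x i - s) * Fd i.
  have H := @sum_pairs n (fun i j => (x i - x j) * Fd i).
  have H2 : \sum_(i < n) \sum_(j < n) (x i - x j) * Fd i = \sum_(i < n) (n%:R * x i - s) * Fd i.
    apply: eq_bigr => i _; rewrite /s -mulr_suml sumrB sumr_const card_ord mulr_natl; reflexivity.
  rewrite H2 in H; rewrite H [X in _ = _ + X]big1 ?addr0; last by move=> i _; rewrite subrr mul0r.
  apply: eq_bigr => i _; apply: eq_bigr => j _; rewrite /Fd; ring.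
rewrite E2 E1.
have nz : n%:R != 0 :> R by rewrite pnatr_eq0 -lt0n.
rewrite mulfK //.
have E3 : \sum_(i < n) 2^-1 * x i * (1 - x i) * P i =
   2^-1 * ((\sum_(i < n) x i * P i * s - \sum_(i < n) x i * x i * P i)
      + \sum_(i < n) x i * (1 - s) * P i).
  rewrite -sumrB -big_split mulr_sumr; apply: eq_bigr => i _ /=; ring.
have E4 : \sum_(i < n) (1 - n.+1%:R * x i) * Fd i =
   - (\sum_(i < n) (n%:R * x i - s) * Fd i + \sum_(i < n) (x i - (1 - s)) * Fd i).
  rewrite -big_split -sumrN; apply: eq_bigr => i _ /=; rewrite -natr1; ring.
rewrite -/C; move: E3 E4; rewrite /P /Fd => -> ->.
set D := (X in 2^-1 * (_ - _ - _ + X)); set E := (X in _ - m / 4 * (_ + X) = _).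
set D2 := (X in _ = 2^-1 * (_ - _ + X) - _ + _); set E2b := (X in _ = _ + m / 4 * - (_ + X)).
have -> : D2 = D by []. have -> : E2b = E by [].
by field.
Qed.



Lemma lift_shift n (z : 'rV[R]_n) (i : 'I_n) (h : R) :
  @simplex_lift R n.+1 (h *: ebasis R i + z) =
  h *: (ebasis R (widen_ord (leqnSn n) i) - ebasis R ord_max) + @simplex_lift R n.+1 z.
Proof.
apply/rowP => k; rewrite !mxE.
case: insubP => [j _ vj|nlt] /=.
  rewrite !mxE eqxx /=.
  have -> : (k == widen_ord (leqnSn n) i) = (j == i).
    apply/eqP/eqP => [E|E]; apply/val_inj => /=.
      by rewrite vj E.
    by rewrite -vj E.
  have -> : (k == ord_max) = false.
    by apply/eqP => E; move: (ltn_ord j); rewrite vj E /= ltnn.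
  by rewrite subr0 mulr_natr mulrb; case: (j == i); rewrite ?add0r.
have kE : k = ord_max by apply/val_inj => /=; apply/eqP; rewrite eqn_leq -ltnS ltn_ord /= leqNgt nlt.
have -> : (k == widen_ord (leqnSn n) i) = false.
  by apply/eqP => E; move: nlt; rewrite E /= ltn_ord.
rewrite kE eqxx /= sub0r mulrN1.
have -> : \sum_(j < n) (h *: ebasis R i + z) 0 j = h + \sum_(j < n) z 0 j.
  rewrite (eq_bigr (fun j => h * (j == i)%:R + z 0 j)); last first.
    by move=> j _; rewrite !mxE eqxx.
  rewrite big_split /= -mulr_sumr (bigD1 i) //= eqxx big1 ?addr0 ?mulr1 //.
  by move=> j /negbTE ->.
ring.
Qed.


Set Implicit Arguments.
Unset Strict Implicit.

Lemma derive_transfer (U1 U2 : normedModType R) (F : U2 -> R) (psi : U1 -> U2) z v w :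
  (forall h : R, psi (h *: v + z) = h *: w + psi z) ->
  derive (F \o psi) z v = derive F (psi z) w /\
  (derivable (F \o psi) z v <-> derivable F (psi z) w).
Proof.
move=> H.
have E : (fun h : R => h^-1 *: (((F \o psi) \o shift z) (h *: v) - (F \o psi) z)) =
         (fun h : R => h^-1 *: ((F \o shift (psi z)) (h *: w) - F (psi z))).
  by apply: funext => h /=; rewrite H.
by rewrite /derive /derivable E.
Qed.

Lemma deriveBv (U : normedModType R) (F : U -> R) y a b :
  differentiable F y -> derive F y (a - b) = derive F y a - derive F y b.
Proof. by move=> dF; rewrite !deriveE // linearB. Qed.

Lemma mvt_dir (U : normedModType R) (G : U -> R) p v t : 0 < t ->
  (forall y, differentiable G y) ->
  exists2 s, 0 < s < t & G (p + t *: v) - G p = t * derive G (p + s *: v) v.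
Proof.
move=> t0 dG.
pose psi := fun s : R => p + s *: v.
have Hpsi (x h : R) : psi (h *: 1 + x) = h *: v + psi x.
  by rewrite /psi -[h *: 1]/(h * 1) mulr1 scalerDl addrCA.
have isd (x : R) : is_derive x 1 (G \o psi) (derive G (psi x) v).
  have [E1 E2] := @derive_transfer _ _ G psi x 1 v (Hpsi x).
  have dd : derivable (G \o psi) x 1 by apply/E2/diff_derivable.
  by apply: DeriveDef.
have cont : {within `[0, t], continuous (G \o psi)}%classic.
  apply: continuous_subspaceT => x.
  have dd : derivable (G \o psi) x 1 by case: (isd x).
  by apply: differentiable_continuous; apply/derivable1_diffP.
have [c c0t E] := @MVT R (G \o psi) (fun x => derive G (psi x) v) 0 t t0
  (fun x _ => isd x) cont.
exists c; first by move: c0t; rewrite in_itv.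
by move: E; rewrite /= /psi scale0r addr0 subr0 mulrC.
Qed.

Lemma diff_shift (U : normedModType R) (F : U -> R) (c z : U) :
  (forall y, differentiable F y) -> differentiable (fun z => F (z + c)) z.
Proof.
move=> dF.
have -> : (fun z => F (z + c)) = F \o (fun z => z + c) by [].
apply: differentiable_comp => //.
Qed.


Definition Delta (U : normedModType R) (F : U -> R) y a b t :=
  F (y + t *: a + t *: b) - F (y + t *: a) - F (y + t *: b) + F y.
Arguments Delta {U}.

Lemma Delta_sym (U : normedModType R) (F : U -> R) y a b t :
  Delta F y a b t = Delta F y b a t.
Proof. by rewrite /Delta [y + t *: a + _]addrAC; ring. Qed.

Lemma Delta_mvt (U : normedModType R) (F : U -> R) y a b t : 0 < t ->
  (forall z, differentiable F z) ->
  (forall z, differentiable (fun z => derive F z a) z) ->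
  exists s, exists r, [/\ 0 < s < t, 0 < r < t &
    Delta F y a b t = t ^+ 2 * derive (fun z => derive F z a) (y + s *: a + r *: b) b].
Proof.
move=> t0 dF dK.
pose G1 := fun z => F (z + t *: b) - F z.
have dG1 z : differentiable G1 z.
  by apply: differentiableB => //; apply: diff_shift.
have [s s0t E1] := @mvt_dir _ G1 y a t t0 dG1.
have E2 q : derive G1 q a = derive F (q + t *: b) a - derive F q a.
  rewrite (@deriveB _ _ _ (fun z => F (z + t *: b)) F).
  - congr (_ - _).
    have Hpsi (h : R) : (fun z => z + t *: b) (h *: a + q) = h *: a + (fun z => z + t *: b) q.
      by rewrite /= addrA.
    by case: (@derive_transfer _ _ F (fun z => z + t *: b) q a a Hpsi).
  - by apply: diff_derivable; apply: diff_shift.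
  - by apply: diff_derivable.
have [r r0t E3] := @mvt_dir _ _ (y + s *: a) b t t0 dK.
exists s, r; split => //.
have -> : Delta F y a b t = G1 (y + t *: a) - G1 y by rewrite /Delta /G1; ring.
by rewrite E1 E2 E3 expr2 mulrA.
Qed.


Lemma near_pt (U : normedModType R) (y a b : U) s r t : 0 < s < t -> 0 < r < t ->
  `|y - (y + s *: a + r *: b)| <= t * (`|a| + `|b|).
Proof.
move=> /andP[s0 st] /andP[r0 rt].
have -> : y - (y + s *: a + r *: b) = - (s *: a + r *: b).
  by rewrite -addrA opprD addrA subrr add0r.
rewrite normrN; apply: le_trans (ler_normD _ _) _.
rewrite !normrZ (ger0_norm (ltW s0)) (ger0_norm (ltW r0)) mulrDr.
by apply: lerD; apply: ler_wpM2r => //; apply: ltW.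
Qed.

Lemma cont_ball (U : normedModType R) (C : U -> R) y e : continuous C -> 0 < e ->
  exists2 d, 0 < d & forall z, `|y - z| < d -> `|C y - C z| < e.
Proof.
move=> cC e0.
have := cC y; move/cvgrPdist_lt => /(_ e e0) /nbhs_normP [d d0 Hd].
by exists d => // z Hz; apply: Hd.
Qed.

Lemma schwarz (U : normedModType R) (F : U -> R) y a b :
  (forall z, differentiable F z) ->
  (forall z, differentiable (fun z => derive F z a) z) ->
  (forall z, differentiable (fun z => derive F z b) z) ->
  continuous (fun z => derive (fun w => derive F w a) z b) ->
  continuous (fun z => derive (fun w => derive F w b) z a) ->
  derive (fun w => derive F w a) y b = derive (fun w => derive F w b) y a.
Proof.
move=> dF dA dB c1 c2.
set C1 := fun z => derive (fun w => derive F w a) z b.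
set C2 := fun z => derive (fun w => derive F w b) z a.
rewrite -/(C1 y) -/(C2 y).
apply/eqP; rewrite -subr_eq0; apply/negPn/negP => Hne.
pose e := `|C1 y - C2 y| / 3.
have e0 : 0 < e by rewrite divr_gt0 // normr_gt0.
have [d1 d10 H1] := cont_ball y c1 e0.
have [d2 d20 H2] := cont_ball y c2 e0.
pose D := Num.min d1 d2.
have D0 : 0 < D by rewrite lt_min d10 d20.
pose t := D / (`|a| + `|b| + 1).
have den0 : 0 < `|a| + `|b| + 1 by rewrite ltr_wpDl // addr_ge0.
have t0 : 0 < t by rewrite divr_gt0.
have tD : t * (`|a| + `|b|) < D.
  have E : t * (`|a| + `|b| + 1) = D by rewrite divfK // gt_eqF.
  rewrite -E mulrDr; lra.
have [s [r [st rt E1]]] := @Delta_mvt _ F y a b t t0 dF dA.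
have [s' [r' [st' rt' E2]]] := @Delta_mvt _ F y b a t t0 dF dB.
set p := y + s *: a + r *: b in E1.
set q := y + s' *: b + r' *: a in E2.
have Hp : `|y - p| < D := le_lt_trans (near_pt y a b st rt) tD.
have Hq : `|y - q| < D by apply: le_lt_trans (near_pt y b a st' rt') _; rewrite addrC.
have Epq : C1 p = C2 q.
  apply: (@mulfI _ (t ^+ 2)); first by rewrite expf_neq0 // gt_eqF.
  by rewrite -E1 -E2 Delta_sym.
have Hp1 : `|C1 y - C1 p| < e by apply: H1; apply: lt_le_trans Hp _; rewrite ge_min lexx.
have Hq2 : `|C2 y - C2 q| < e by apply: H2; apply: lt_le_trans Hq _; rewrite ge_min lexx orbT.
move: Hp1 Hq2 Epq Hne; rewrite /e; clearbody C1 C2 => Hp1 Hq2 Epq Hne.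
have N0 : 0 < `|C1 y - C2 y| by rewrite normr_gt0.
have : `|C1 y - C2 y| <= `|C1 y - C1 p| + `|C2 y - C2 q|.
  have -> : C1 y - C2 y = (C1 y - C1 p) - (C2 y - C2 q) by rewrite Epq; ring.
  exact: ler_normB.
move: N0 Hp1 Hq2; set N := `|C1 y - C2 y|; set A := `|C1 y - C1 p|; set B := `|C2 y - C2 q|.
clearbody N A B; lra.
Qed.


Lemma pd_lift n (H : 'rV[R]_n.+1 -> R) (i : 'I_n) z : (forall y, differentiable H y) ->
  pd i (fun z => H (@simplex_lift R n.+1 z)) z =
  pd (widen_ord (leqnSn n) i) H (@simplex_lift R n.+1 z) - pd ord_max H (@simplex_lift R n.+1 z).
Proof.
move=> dH; rewrite /pd.
have [E _] := @derive_transfer 'rV[R]_n 'rV[R]_n.+1 H (@simplex_lift R n.+1) z (ebasis R i) _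
  (fun h => @lift_shift n z i h).
transitivity (derive (H \o @simplex_lift R n.+1) z (ebasis R i)); first by [].
by rewrite E deriveBv.
Qed.

Lemma pdB n (A B : 'rV[R]_n -> R) (a : 'I_n) y :
  differentiable A y -> differentiable B y ->
  pd a (fun y => A y - B y) y = pd a A y - pd a B y.
Proof.
move=> dA dB; rewrite /pd.
rewrite -(@deriveB _ _ _ A B y (ebasis R a) (diff_derivable (v:=ebasis R a) dA) (diff_derivable (v:=ebasis R a) dB)).
by [].
Qed.

End S.

Theorem proposition5p3 (R : realType) (d : nat) (hd : (2 <= d)%N) (m : R)
    (f : 'rV[R]_d -> R) (hf : smooth f) (x : 'rV[R]_(d.-1))
    (hx0 : forall i, 0 <= x 0 i) (hx1 : \sum_(j < d.-1) x 0 j <= 1) :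
  let theta := m / 4 * (d.-1)%:R in
  let g := fun z : 'rV[R]_(d.-1) => f (simplex_lift z) in
  L_BEP m f (simplex_lift x) = L_WF theta g x.
Proof.
case: d hd f hf x hx0 hx1 => [|[|k]] // _ f hf x _ _ theta g.
have [dF Hi] := hf 2.
have dP i : forall y, differentiable (pd i f) y by case: (Hi i).
have cP i j : continuous (pd j (pd i f)) by case: (Hi i) => _ /(_ j).
set y := simplex_lift x.
pose w := widen_ord (leqnSn k.+1); pose l : 'I_k.+2 := ord_max.
pose S a b := pd a (pd b f) y.
have Ssym a b : S a b = S b a.
  rewrite /S /pd; apply: schwarz => //; [exact: dP | exact: dP | exact: cP | exact: cP].
have Lg i : pd i g = fun z => pd (w i) f (simplex_lift z) - pd l f (simplex_lift z).
  by apply: funext => z; rewrite /g (@pd_lift R k.+1 f i z dF).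
have Lgg i j : pd i (pd j g) x = (S (w i) (w j) - S (w i) l) - (S l (w j) - S l l).
  rewrite Lg (@pd_lift R k.+1 (fun y => pd (w j) f y - pd l f y) i x); last first.
    by move=> z; apply: differentiableB; apply: dP.
  by rewrite !pdB.
have Lpd a b : pdiff a b (pdiff a b f) y = (S a a - S a b) - (S b a - S b b).
  by rewrite /pdiff !pdB.
have hyw i : y 0 (w i) = x 0 i.
  rewrite /y /simplex_lift mxE; case: insubP => [j _ vj|nlt] /=.
    by congr (x 0 _); apply/val_inj; rewrite vj.
  by move: nlt; rewrite /= ltn_ord.
have hyl : y 0 l = 1 - \sum_(i < k.+1) x 0 i.
  rewrite /y /simplex_lift mxE; case: insubP => [j _ vj|nlt] //=.
  by move: (ltn_ord j); rewrite vj /= ltnn.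
rewrite /L_BEP /L_WF.
under eq_bigr => a _ do under eq_bigr => b _ do rewrite Lpd.
under [X in _ = X - _ + _]eq_bigr => i _ do rewrite Lgg.
under [X in _ = _ - X + _]eq_bigr => i _ do under eq_bigr => j _ do rewrite Lgg.
under [X in _ = _ + _ * X]eq_bigr => i _ do rewrite Lg.
exact: (@algebra R k.+1 (ltn0Sn k) (fun i => x 0 i) (fun a => y 0 a)
  (fun a => pd a f y) S m Ssym hyw hyl).
Qed.
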